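(* Let $\kappa>0$, $\beta>0$, $\lambda>0$ and $U\neq0$ be real. Suppose $(Q,P,X,Z)\in\mathbb{R}^4$ with $Q\neq0$ satisfies \begin{align*} P-\kappa Q+sP&=0,\\ Q+2\sqrt2\,\lambda X+sQ+\kappa P&=0,\\ X-2\sqrt2\,\frac{\lambda}{\beta}\,ZQ&=0,\\ X^2+Z^2&=\tfrac14, \end{align*} where $s:=\frac U2(Q^2+P^2)$. Then $s\neq-1$, $$P=\frac{\kappa}{1+s}Q,\qquad X=\frac{2\sqrt2\,\lambda Q}{\beta}Z,\qquad Z=-\frac{\beta}{8\lambda^2}\,\frac{(s+1)^2+\kappa^2}{s+1},$$ $$Q^2=\frac{2s(s+1)^2}{U\big[(s+1)^2+\kappa^2\big]},\qquad P^2=\frac{2s\kappa^2}{U\big[(s+1)^2+\kappa^2\big]},$$ and $s$ is a root of $$f(s)=\big((s+1)^2+\kappa^2\big)\Big[\frac1U\,s(s+1)^2+\frac{\beta^2}{16\lambda^2}\big((s+1)^2+\kappa^2\big)\Big]-\lambda^2(s+1)^2 .$$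
   Context: These are the steady-state mean-field equations (with $Y=0$) of the dissipative quantum Rabi model with Kerr nonlinearity, written in normalized units: $\kappa$ and $\lambda$ stand for $\kappa/\omega_c$ and $\lambda/\omega_c$, $\beta=\omega_a/\omega_c$, $U=2KN/\omega_c$, and $s=U|\alpha|^2$ with $|\alpha|^2=(Q^2+P^2)/2$. Solutions with $Q\neq0$ are the superradiant steady states. *)

(* Defs.v *)
From Stdlib Require Import Reals.
Open Scope R_scope.

(* s := (U/2)(Q^2+P^2) = U |alpha|^2 *)
Definition s_of (U Q P : R) : R := U / 2 * (Q ^ 2 + P ^ 2).

Definition f_poly (kappa beta lambda U s : R) : R :=
  ((s + 1) ^ 2 + kappa ^ 2) *
    (/ U * s * (s + 1) ^ 2 + beta ^ 2 / (16 * lambda ^ 2) * ((s + 1) ^ 2 + kappa ^ 2))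
  - lambda ^ 2 * (s + 1) ^ 2.

(* Main.v *)
Require Import Defs.
From Stdlib Require Import Reals Lra.
Open Scope R_scope.

Theorem mainTheorem3 (kappa beta lambda U Q P X Z : R) :
  0 < kappa -> 0 < beta -> 0 < lambda -> U <> 0 -> Q <> 0 ->
  let s := s_of U Q P in
  P - kappa * Q + s * P = 0 ->
  Q + 2 * sqrt 2 * lambda * X + s * Q + kappa * P = 0 ->
  X - 2 * sqrt 2 * (lambda / beta) * Z * Q = 0 ->
  X ^ 2 + Z ^ 2 = 1 / 4 ->
  s <> -1 /\
  P = kappa / (1 + s) * Q /\
  X = 2 * sqrt 2 * lambda * Q / beta * Z /\
  Z = - (beta / (8 * lambda ^ 2)) * (((s + 1) ^ 2 + kappa ^ 2) / (s + 1)) /\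
  Q ^ 2 = 2 * s * (s + 1) ^ 2 / (U * ((s + 1) ^ 2 + kappa ^ 2)) /\
  P ^ 2 = 2 * s * kappa ^ 2 / (U * ((s + 1) ^ 2 + kappa ^ 2)) /\
  f_poly kappa beta lambda U s = 0.
Proof.
  intros hk hb hl hU hQ s H1 H2 H3 H4.
  assert (Hs : s = U / 2 * (Q ^ 2 + P ^ 2)) by reflexivity.
  clearbody s.
  assert (Ha : s + 1 <> 0).
  { intro H. assert (kappa * Q = 0) by (replace s with (-1) in H1 by lra; lra).
    apply Rmult_integral in H0; destruct H0; lra. }
  assert (Ha' : 1 + s <> 0) by lra.
  assert (E1 : (s + 1) * P = kappa * Q) by lra.
  assert (HP : P = kappa / (1 + s) * Q).
  { replace P with (((s+1) * P) / (1 + s)) by (field; auto). rewrite E1; field; auto. }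
  assert (HX : X = 2 * sqrt 2 * lambda * Q / beta * Z).
  { replace X with (2 * sqrt 2 * (lambda / beta) * Z * Q) by lra. field; lra. }
  assert (r2 : sqrt 2 ^ 2 = 2) by (simpl; rewrite Rmult_1_r; apply sqrt_sqrt; lra).
  assert (E3 : beta * X = 2 * sqrt 2 * lambda * Z * Q).
  { rewrite HX; field; lra. }
  assert (key : Q * ((s+1)^2*beta + kappa^2*beta + 8*lambda^2*Z*(s+1)) = 0).
  { replace (Q * ((s+1)^2*beta + kappa^2*beta + 8*lambda^2*Z*(s+1))) with
      (beta*(s+1)*(Q + 2 * sqrt 2 * lambda * X + s * Q + kappa * P)
       - beta*kappa*((s+1)*P - kappa*Q)
       - 2*sqrt 2*lambda*(s+1)*(beta*X - 2*sqrt 2*lambda*Z*Q)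
       + 4*lambda^2*(s+1)*Z*Q*(2 - sqrt 2 ^ 2)) by ring.
    rewrite H2, E1, E3, r2. ring. }
  apply Rmult_integral in key; destruct key as [key|key]; [contradiction|].
  assert (HZ : Z = - (beta / (8 * lambda ^ 2)) * (((s + 1) ^ 2 + kappa ^ 2) / (s + 1))).
  { replace Z with ((8*lambda^2*Z*(s+1)) / (8*lambda^2*(s+1))) by (field; split; lra).
    replace (8*lambda^2*Z*(s+1)) with (-((s+1)^2*beta + kappa^2*beta)) by lra.
    field; split; lra. }
  assert (HD : (s + 1) ^ 2 + kappa ^ 2 <> 0) by nra.
  assert (HQ2 : Q ^ 2 = 2 * s * (s + 1) ^ 2 / (U * ((s + 1) ^ 2 + kappa ^ 2))).
  { assert (E : 2 * s * (s + 1) ^ 2 = Q ^ 2 * (U * ((s + 1) ^ 2 + kappa ^ 2))).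
    { rewrite Hs at 1. replace (2 * (U / 2 * (Q ^ 2 + P ^ 2)) * (s + 1) ^ 2) with
        (U * (Q^2 * (s+1)^2 + ((s+1)*P)^2)) by (field; auto).
      rewrite E1. ring. }
    rewrite E. field. split; auto. }
  split; [lra|]. split; [exact HP|]. split; [exact HX|]. split; [exact HZ|].
  split; [exact HQ2|]. split.
  { rewrite HP, Rpow_mult_distr, HQ2. replace (1+s) with (s+1) by ring. field; auto. }
  assert (T1 : / U * s * (s + 1) ^ 2 = Q ^ 2 * ((s + 1) ^ 2 + kappa ^ 2) / 2).
  { replace (/ U * s) with ((Q^2 + P^2)/2) by (rewrite Hs; field; auto).
    rewrite HP. field; auto. }
  assert (T2 : lambda ^ 2 * (s + 1) ^ 2 = 4 * lambda ^ 2 * (s+1)^2 * (X ^ 2 + Z ^ 2))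
    by (rewrite H4; field).
  assert (HX2 : X ^ 2 = 8 * lambda ^ 2 * Q ^ 2 / beta ^ 2 * Z ^ 2).
  { rewrite HX. replace ((2 * sqrt 2 * lambda * Q / beta * Z) ^ 2) with
      (4 * sqrt 2 ^ 2 * lambda ^ 2 * Q ^ 2 * Z ^ 2 / beta ^ 2) by (field; lra).
    rewrite r2; field; lra. }
  unfold f_poly. rewrite T1, T2, HX2, HZ. field. split; lra.
Qed.
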